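(* For all reals $x\ge D\ge 0$, \[ \sum_{d\le \min(D,\,x/10^{12})}\frac{\mu^2(d)\varphi(d)}{d^{2}\log(x/d)^2}\,g_1(d)^2\le 0.047. \]
   Context: $\mu$ is the Möbius function, $\varphi$ Euler's totient, $d$ ranges over positive integers (an empty sum is $0$). Let $\xi=1-1/(12\log 10)$. $g_1$ is the multiplicative function defined on primes by $g_1(2)=2.06$ and $g_1(p)=p^\xi/(p^\xi-1)$ for $p\ge 3$. *)

(* Defs.v *)
From Stdlib Require Import Reals.
From mathcomp Require Import all_boot.

Open Scope R_scope.

Definition Rleb (a b : R) : bool := if Rle_dec a b then true else false.

(* Möbius function: mu(n) = (-1)^k if n > 0 is squarefree with k prime
   factors, 0 otherwise (and mu(0) = 0 by convention, never used). *)
Definition mobius (n : nat) : R :=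
  if (0 < n)%N && all (fun p => logn p n == 1)%N (primes n)
  then (-1) ^ size (primes n) else 0.

Definition phiR (n : nat) : R := INR (totient n).

Definition xi : R := 1 - 1 / (12 * ln 10).

Definition g1p (p : nat) : R :=
  if p == 2%N then 206 / 100
  else Rpower (INR p) xi / (Rpower (INR p) xi - 1).

(* Multiplicative extension of g1: g1(n) = prod_{p^k || n} g1(p)^k.
   (Only squarefree arguments matter in the theorem, because of mu^2.) *)
Definition g1 (n : nat) : R :=
  \big[Rmult/1]_(p <- primes n) (g1p p ^ logn p n).

Definition term (x : R) (d : nat) : R :=
  (mobius d) ^ 2 * phiR d / ((INR d) ^ 2 * (ln (x / INR d)) ^ 2) * (g1 d) ^ 2.

(* Sum over positive integers d <= M; the range bound Z.to_nat (up M)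
   exceeds every integer d <= M, and the filter selects exactly d in [1, M]. *)
Definition sum_upto (M : R) (F : nat -> R) : R :=
  \big[Rplus/0]_(d < Z.to_nat (up M) | (0 < d)%N && Rleb (INR d) M) F d.

(* Main.v *)
Require Import Defs.
From Stdlib Require Import Reals Lra Lia Psatz ZArith.
From HB Require Import structures.
From mathcomp Require Import all_boot zify.
Open Scope R_scope.


Lemma div_pow (a b : R) (n : nat) : b <> 0 -> (a / b) ^ n = a ^ n / b ^ n.
Proof. intros hb. unfold Rdiv. rewrite Rpow_mult_distr. rewrite pow_inv. reflexivity. Qed.

Lemma div_le_l a b c : 0 < c -> a <= b * c -> a / c <= b.
Proof. intros hc h. apply Rmult_le_reg_r with c; auto. replace (a / c * c) with a by (field; lra). lra. Qed.
Lemma div_le_r a b c : 0 < c -> a * c <= b -> a <= b / c.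
Proof. intros hc h. apply Rmult_le_reg_r with c; auto. replace (b / c * c) with b by (field; lra). lra. Qed.

Lemma Zpow_le (a b c : Z) (n : nat) : (0 < b)%Z ->
  (a ^ Z.of_nat n <= c * b ^ Z.of_nat n)%Z -> (IZR a / IZR b) ^ n <= IZR c.
Proof.
  intros hb h. assert (hb' : 0 < IZR b) by (apply IZR_lt; lia).
  assert (hb0 : IZR b <> 0) by lra. rewrite (div_pow _ _ _ hb0). rewrite !pow_IZR.
  assert (0 < IZR (b ^ Z.of_nat n)) by (apply IZR_lt; apply Z.pow_pos_nonneg; lia).
  apply div_le_l; auto. rewrite <- mult_IZR. apply IZR_le. lia.
Qed.

Lemma Zpow_ge (a b c : Z) (n : nat) : (0 < b)%Z ->
  (c * b ^ Z.of_nat n <= a ^ Z.of_nat n)%Z -> IZR c <= (IZR a / IZR b) ^ n.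
Proof.
  intros hb h. assert (hb' : 0 < IZR b) by (apply IZR_lt; lia).
  assert (hb0 : IZR b <> 0) by lra. rewrite (div_pow _ _ _ hb0). rewrite !pow_IZR.
  assert (0 < IZR (b ^ Z.of_nat n)) by (apply IZR_lt; apply Z.pow_pos_nonneg; lia).
  apply div_le_r; auto. rewrite <- mult_IZR. apply IZR_le. lia.
Qed.

Lemma exp_le_mono x y : x <= y -> exp x <= exp y.
Proof. intros [h|h]; [left; apply exp_increasing; auto| subst; lra]. Qed.

Lemma ln_le_mono x y : 0 < x -> x <= y -> ln x <= ln y.
Proof. intros hx [h|h]; [left; apply ln_increasing; auto| subst; lra]. Qed.

Lemma exp_nmul (n : nat) t : exp (INR n * t) = exp t ^ n.
Proof.
  induction n as [|n IH]. simpl. rewrite Rmult_0_l exp_0. reflexivity.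
  rewrite S_INR Rmult_plus_distr_r Rmult_1_l exp_plus IH. simpl. ring.
Qed.

Lemma exp_upper (n : nat) t : 0 <= t -> t < INR n ->
  exp t <= (INR n / (INR n - t)) ^ n.
Proof.
  intros ht htn. assert (hn : 0 < INR n) by lra.
  replace t with (INR n * (t / INR n)) at 1 by (field; lra).
  rewrite exp_nmul. apply pow_incr. split. left; apply exp_pos.
  assert (h1 := exp_ineq1_le (- (t / INR n))).
  rewrite exp_Ropp in h1.
  assert (0 < exp (t / INR n)) by apply exp_pos.
  assert (0 < 1 - t / INR n).
  { apply Rlt_Rminus. apply Rmult_lt_reg_r with (INR n); auto; replace (t / INR n * INR n) with t by (field; lra); lra. }
  replace (INR n / (INR n - t)) with (/ (1 - t / INR n)) by (field; lra).
  apply Rmult_le_reg_r with (1 - t/ INR n); auto.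
  replace (/ (1 - t / INR n) * (1 - t / INR n)) with 1 by (field; lra).
  apply Rle_trans with (exp (t/INR n) * / exp (t/INR n)).
  apply Rmult_le_compat_l; lra. right; field; lra.
Qed.

Definition Lg : R := 12 * ln 10.

Lemma Lg_ge : 27 <= Lg.
Proof.
  unfold Lg. assert (h : 9/4 <= ln 10).
  { rewrite <- (ln_exp (9/4)). apply ln_le_mono. apply exp_pos.
    eapply Rle_trans. apply (exp_upper 64). lra. rewrite INR_IZR_INZ. simpl. lra.
    rewrite INR_IZR_INZ. simpl.
    replace (IZR 64 / (IZR 64 - 9/4)) with (IZR 256 / IZR 247) by (field; lra).
    apply (Zpow_le 256 247 10 64). lia. vm_compute. discriminate. }
  lra.
Qed.


Lemma Lg_pos : 0 < Lg.
Proof. have := Lg_ge. lra. Qed.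

Lemma natR_le k p : (k <= p)%N -> INR k <= INR p.
Proof. by move/leP; apply le_INR. Qed.
Ltac natR k p h := let H := fresh in have H := natR_le k p h; rewrite (INR_IZR_INZ k) /= in H.

Definition Ep (p : nat) : R := exp (ln (INR p) / Lg).
Definition qq (p : nat) : R := INR p / Ep p.

Lemma Ep_pos p : 0 < Ep p.
Proof. apply exp_pos. Qed.

Lemma Rpower_xi (p : nat) : (0 < INR p) -> Rpower (INR p) xi = qq p.
Proof.
  move=> hp. rewrite /Rpower /qq /Ep /xi.
  have -> : (1 - 1 / (12 * ln 10)) * ln (INR p) = ln (INR p) + - (ln (INR p) / Lg).
  { rewrite /Lg. have := Lg_pos; rewrite /Lg => h. field. lra. }
  rewrite exp_plus exp_Ropp exp_ln //.
Qed.

Lemma Ep_ge1 (p : nat) : (1 <= p)%N -> 1 <= Ep p.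
Proof.
  move=> hp. have h1 : 1 <= INR p by (apply (le_INR 1); apply/leP).
  rewrite /Ep -exp_0. apply exp_le_mono.
  have := ln_le_mono 1 (INR p) ltac:(lra) h1. rewrite ln_1 => h.
  apply Rmult_le_pos; auto. left; apply Rinv_0_lt_compat, Lg_pos.
Qed.

Lemma Ep_le (p : nat) (B : R) : (1 <= p)%N -> 0 < B -> INR p <= B ^ 27 -> Ep p <= B.
Proof.
  move=> hp hB hpB. have h1 : 1 <= INR p by (apply (le_INR 1); apply/leP).
  rewrite /Ep. rewrite -(exp_ln B hB). apply exp_le_mono.
  have hl0 : 0 <= ln (INR p).
  { have := ln_le_mono 1 (INR p) ltac:(lra) h1. rewrite ln_1. done. }
  have hl : ln (INR p) <= 27 * ln B.
  { have := ln_le_mono (INR p) (B ^ 27) ltac:(lra) hpB. rewrite ln_pow //.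
    have -> : INR 27 = 27 by (rewrite INR_IZR_INZ; simpl; lra). done. }
  have := Lg_ge. move=> hL.
  apply Rle_trans with (ln (INR p) / 27).
  { apply Rmult_le_compat_l; auto. apply Rinv_le_contravar; lra. }
  lra.
Qed.

Lemma Ep_lt (p : nat) : (2 <= p)%N -> Ep p < INR p.
Proof.
  move=> hp. have h1 : 2 <= INR p by (apply (le_INR 2); apply/leP).
  rewrite /Ep. rewrite -{2}(exp_ln (INR p)); last lra.
  apply exp_increasing.
  have hl0 : 0 < ln (INR p).
  { have := ln_increasing 1 (INR p) ltac:(lra) ltac:(lra). rewrite ln_1. done. }
  have := Lg_ge => hL.
  apply Rlt_le_trans with (ln (INR p) / 1); last (right; field).
  apply Rmult_lt_compat_l; auto. apply Rinv_lt_contravar; lra.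
Qed.

Definition hh (q : nat) : R := (1 - / INR q) * g1p q ^ 2.
Definition kk (q : nat) : R := hh q - 1.

Lemma g1p_odd (p : nat) : (2 <= p)%N -> p <> 2%N -> g1p p = qq p / (qq p - 1).
Proof.
  move=> hp hp2. have h1 : 0 < INR p by (apply (lt_INR 0); apply/ltP; lia).
  rewrite /g1p. have -> : (p == 2%N) = false by apply/eqP.
  by rewrite Rpower_xi.
Qed.

Lemma qq_gt1 (p : nat) : (2 <= p)%N -> 1 < qq p.
Proof.
  move=> hp. have := Ep_lt p hp. have := Ep_pos p. rewrite /qq => h1 h2.
  apply Rmult_lt_reg_r with (Ep p); auto. rewrite Rmult_1_l /Rdiv Rmult_assoc Rinv_l; lra.
Qed.

Lemma frac_dec a b : 1 < a -> a <= b -> b / (b - 1) <= a / (a - 1).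
Proof.
  move=> ha hab. apply div_le_l; first lra.
  have -> : a / (a - 1) * (b - 1) = (a * (b - 1)) / (a - 1) by field; lra.
  apply div_le_r; first lra. nra.
Qed.

Lemma frac_pos a : 1 < a -> 0 < a / (a - 1).
Proof. move=> ha. apply Rdiv_lt_0_compat; lra. Qed.

Lemma hh_upper (p : nat) (Q0 : R) : (2 <= p)%N -> p <> 2%N -> 1 < Q0 -> Q0 <= qq p ->
  hh p <= (1 - / INR p) * (Q0 / (Q0 - 1)) ^ 2.
Proof.
  move=> hp hp2 hQ hQq. have h2 : 2 <= INR p by (apply (le_INR 2); apply/leP).
  rewrite /hh (g1p_odd p hp hp2). apply Rmult_le_compat_l.
  { have : / INR p <= / 2 by apply Rinv_le_contravar; lra. lra. }
  apply pow_incr. split. left; apply frac_pos. have := qq_gt1 p hp. lra.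
  apply frac_dec; auto.
Qed.

Lemma qq_le (p : nat) : (2 <= p)%N -> qq p <= INR p.
Proof.
  move=> hp. have h2 : 2 <= INR p by (apply (le_INR 2); apply/leP).
  have := Ep_ge1 p ltac:(lia). rewrite /qq => hE.
  apply div_le_l; first lra. nra.
Qed.

Lemma kk_nonneg (p : nat) : (3 <= p)%N -> 0 <= kk p.
Proof.
  move=> hp. have h3 : 3 <= INR p by natR 3%N p hp.
  have hp2 : p <> 2%N by lia.
  rewrite /kk /hh (g1p_odd p ltac:(lia) hp2).
  have hq1 := qq_gt1 p ltac:(lia). have hqp := qq_le p ltac:(lia).
  have hg : INR p / (INR p - 1) <= qq p / (qq p - 1) by apply frac_dec.
  have hg0 : 0 <= INR p / (INR p - 1) by (left; apply frac_pos; lra).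
  have hsq : (INR p / (INR p - 1)) ^ 2 <= (qq p / (qq p - 1)) ^ 2 by apply pow_incr; lra.
  have e : (1 - / INR p) * (INR p / (INR p - 1)) ^ 2 = INR p / (INR p - 1) by field; lra.
  have h1 : 1 <= INR p / (INR p - 1).
  { apply div_le_r; lra. }
  have hpos : 0 <= 1 - / INR p.
  { have : / INR p <= / 3 by apply Rinv_le_contravar; lra. lra. }
  have := Rmult_le_compat_l _ _ _ hpos hsq. lra.
Qed.

Lemma hh_nonneg (p : nat) : (2 <= p)%N -> 0 <= hh p.
Proof.
  move=> hp. have h2 : 2 <= INR p by (apply (le_INR 2); apply/leP).
  rewrite /hh. apply Rmult_le_pos. have : / INR p <= / 2 by apply Rinv_le_contravar; lra. lra.
  apply pow2_ge_0.
Qed.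


HB.instance Definition _ := Monoid.isComLaw.Build R 0 Rplus (fun a b c => esym (Rplus_assoc a b c)) Rplus_comm Rplus_0_l.
HB.instance Definition _ := Monoid.isComLaw.Build R 1 Rmult (fun a b c => esym (Rmult_assoc a b c)) Rmult_comm Rmult_1_l.
HB.instance Definition _ := Monoid.isMulLaw.Build R 0 Rmult Rmult_0_l Rmult_0_r.
HB.instance Definition _ := Monoid.isAddLaw.Build R Rmult Rplus Rmult_plus_distr_r Rmult_plus_distr_l.

Definition wq (P q e : nat) : R := if (q <= P)%N then (if e == 1%N then hh q else 0) else 1.
Definition W (P m : nat) : R := \big[Rmult/1]_(q <- primes m) wq P q (logn q m).

Lemma wq_nonneg P q e : prime q -> 0 <= wq P q e.
Proof.
  move=> pq. rewrite /wq. case: (q <= P)%N; last lra. case: (e == 1%N); last lra.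
  apply hh_nonneg. exact: prime_gt1.
Qed.

Lemma W_nonneg P m : 0 <= W P m.
Proof.
  rewrite /W big_seq. apply: (big_ind (fun x => 0 <= x)); [lra | move=> a b; apply Rmult_le_pos |].
  move=> q; rewrite mem_primes => /andP [pq _]. exact: wq_nonneg.
Qed.

Lemma primes_mul_p p m : prime p -> ~~ (p %| m) -> (0 < m)%N ->
  perm_eq (primes (p * m)) (p :: primes m).
Proof.
  move=> pp npm m0. apply: uniq_perm.
  - exact: primes_uniq.
  - rewrite /= primes_uniq andbT mem_primes negb_and negb_and npm. by rewrite !orbT.
  - move=> q. have p0 := prime_gt0 pp. rewrite (primesM _ p0 m0) (primes_prime pp) !inE. done.
Qed.

Lemma logn_notin p m : ~~ (p %| m) -> (0 < m)%N -> logn p m = 0%N.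
Proof.
  move=> npm m0. apply/eqP. rewrite -leqn0 leqNgt logn_gt0 mem_primes negb_and negb_and npm.
  by rewrite !orbT.
Qed.

Lemma W_split P p m : prime p -> ~~ (p %| m) -> (0 < m)%N ->
  W P (p * m) = wq P p 1 * W P m.
Proof.
  move=> pp npm m0. rewrite /W (perm_big _ (primes_mul_p p m pp npm m0)) big_cons.
  have p0 := prime_gt0 pp.
  have -> : logn p (p * m) = 1%N by rewrite (lognM _ p0 m0) (logn_prime _ pp) eqxx (logn_notin p m npm m0).
  congr (_ * _). apply: eq_big_seq => q qin.
  rewrite (lognM _ p0 m0) (logn_prime _ pp).
  have : q != p. { apply/eqP => e; move: qin; rewrite e mem_primes (negbTE npm). by rewrite !andbF. }
  by move/negbTE => ->.
Qed.

Lemma W_zero P p m : prime p -> (p <= P)%N -> (p ^ 2 %| m)%N -> (0 < m)%N -> W P m = 0.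
Proof.
  move=> pp pP p2m m0.
  have pin : p \in primes m.
  { rewrite mem_primes pp m0 /=. apply: dvdn_trans p2m. by rewrite dvdn_exp. }
  rewrite /W (big_rem _ pin) /= /wq pP.
  have : (2 <= logn p m)%N by rewrite -pfactor_dvdn.
  case: (logn p m == 1%N) /eqP => [->|_] //. rewrite Rmult_0_l. done.
Qed.

Lemma W_same P m : ~~ (P.+1 %| m) -> (0 < m)%N -> W P.+1 m = W P m.
Proof.
  move=> nd m0. rewrite /W. apply: eq_big_seq => q qin.
  rewrite /wq. have : q != P.+1.
  { apply/eqP => e; move: qin; rewrite e mem_primes (negbTE nd). by rewrite !andbF. }
  move=> qn. have -> : (q <= P.+1)%N = (q <= P)%N.
  { rewrite leq_eqVlt ltnS. by rewrite (negbTE qn). }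
  done.
Qed.

Lemma W_notprime P m : ~~ prime P.+1 -> (0 < m)%N -> W P.+1 m = W P m.
Proof.
  move=> np m0. rewrite /W. apply: eq_big_seq => q qin.
  rewrite /wq. have : q != P.+1.
  { apply/eqP => e; move: qin; rewrite e mem_primes (negbTE np). done. }
  move=> qn. have -> : (q <= P.+1)%N = (q <= P)%N.
  { rewrite leq_eqVlt ltnS. by rewrite (negbTE qn). }
  done.
Qed.

Lemma W_step P m : prime P.+1 -> (5 <= P.+1)%N -> (0 < m)%N ->
  W P.+1 m <= W P m + (if (P.+1 %| m)%N then kk P.+1 * W P (m %/ P.+1) else 0).
Proof.
  set p := P.+1 => pp p5 m0.
  case: (boolP (p %| m)%N) => pm; last first.
  { rewrite W_same //. lra. }
  have e : m = (p * (m %/ p))%N by rewrite mulnC divnK.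
  have m'0 : (0 < m %/ p)%N. { rewrite divn_gt0 ?prime_gt0 //. apply: dvdn_leq => //. }
  have kp : 0 <= kk p by apply kk_nonneg; lia.
  case: (boolP (p %| m %/ p)%N) => pm'.
  { have p2m : (p ^ 2 %| m)%N by rewrite e expnS expn1 dvdn_mul.
    rewrite (W_zero p p m pp (leqnn p) p2m m0).
    have := W_nonneg P m. have := W_nonneg P (m %/ p). nra. }
  rewrite {1 2}e !W_split //. rewrite W_same //.
  rewrite /wq leqnn eqxx. have -> : (p <= P)%N = false by rewrite /p ltnn.
  rewrite /kk. lra.
Qed.



Lemma sum_le (a b : nat) (F G : nat -> R) :
  (forall i, (a <= i)%N -> (i < b)%N -> F i <= G i) ->
  \big[Rplus/0]_(a <= i < b) F i <= \big[Rplus/0]_(a <= i < b) G i.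
Proof.
  move=> h. rewrite big_nat_cond [X in _ <= X]big_nat_cond.
  apply: (big_ind2 (fun x y => x <= y)); [lra | move=> *; lra |].
  move=> i /andP [/andP [h1 h2] _]. exact: h.
Qed.

Lemma sum_nonneg (a b : nat) (F : nat -> R) :
  (forall i, (a <= i)%N -> (i < b)%N -> 0 <= F i) ->
  0 <= \big[Rplus/0]_(a <= i < b) F i.
Proof.
  move=> h. rewrite big_nat_cond.
  apply: (big_ind (fun x => 0 <= x)); [lra | move=> *; lra |].
  move=> i /andP [/andP [h1 h2] _]. exact: h.
Qed.

Lemma sum_scal (a b : nat) (c : R) (F : nat -> R) :
  \big[Rplus/0]_(a <= i < b) (c * F i) = c * \big[Rplus/0]_(a <= i < b) F i.
Proof. by rewrite big_distrr. Qed.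

Lemma sum_add (a b : nat) (F G : nat -> R) :
  \big[Rplus/0]_(a <= i < b) (F i + G i) = \big[Rplus/0]_(a <= i < b) F i + \big[Rplus/0]_(a <= i < b) G i.
Proof. by rewrite big_split. Qed.

Lemma divS_dvd p n : (1 < p)%N -> (p %| n.+1)%N -> (n.+1 %/ p = (n %/ p).+1)%N.
Proof.
  move=> p1 d. have p0 : (0 < p)%N by lia.
  have := divnD n 1 p0. rewrite addn1 => ->.
  rewrite (divn_small p1) (modn_small p1) addn0.
  have := ltn_pmod n p0. move: d. rewrite /dvdn -addn1 -modnDml => d hlt.
  have e : (n %% p + 1 = p)%N.
  { case: (ltnP (n %% p + 1) p) => h. rewrite modn_small // in d. lia. lia. }
  rewrite e leqnn. lia.
Qed.

Lemma divS_ndvd p n : (1 < p)%N -> ~~ (p %| n.+1)%N -> (n.+1 %/ p = n %/ p)%N.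
Proof.
  move=> p1 d. have p0 : (0 < p)%N by lia.
  have := divnD n 1 p0. rewrite addn1 => ->.
  rewrite (divn_small p1) (modn_small p1) addn0.
  have := ltn_pmod n p0. move: d. rewrite /dvdn -addn1 -modnDml => d hlt.
  have e : (n %% p + 1 < p)%N.
  { case: (ltnP (n %% p + 1) p) => h //. have e : (n %% p + 1 = p)%N by lia.
    by rewrite e modnn in d. }
  have -> : (p <= n %% p + 1)%N = false by lia. lia.
Qed.

Lemma reindex_dvd p n (G : nat -> R) : (1 < p)%N ->
  \big[Rplus/0]_(1 <= m < n.+1) (if (p %| m)%N then G (m %/ p)%N else 0)
  = \big[Rplus/0]_(1 <= m < (n %/ p).+1) G m.
Proof.
  move=> p1. elim: n => [|n IH].
  { rewrite div0n. rewrite !big_geq //. }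
  rewrite big_nat_recr //= IH.
  case d: (p %| n.+1)%N.
  - by rewrite (divS_dvd p n p1 d) [in RHS]big_nat_recr.
  - have d' : ~~ (p %| n.+1)%N by rewrite d.
    rewrite (divS_ndvd p n p1 d'). lra.
Qed.

Definition fy (y : R) (m : nat) : R := / (INR m * ln (y / INR m) ^ 2).

Lemma fy_nonneg y m : 0 <= fy y m.
Proof.
  rewrite /fy. have h : 0 <= INR m * ln (y / INR m) ^ 2 by apply Rmult_le_pos; [apply pos_INR | apply pow2_ge_0].
  case: h => h. left; apply Rinv_0_lt_compat; auto. rewrite -h Rinv_0. lra.
Qed.

Lemma fy_mul y p m : (0 < p)%N -> (0 < m)%N -> fy y (p * m) = / INR p * fy (y / INR p) m.
Proof.
  move=> p0 m0. have hp : 0 < INR p by apply (lt_INR 0); apply/ltP.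
  have hm : 0 < INR m by apply (lt_INR 0); apply/ltP.
  rewrite /fy mult_INR. have -> : y / (INR p * INR m) = y / INR p / INR m by field; lra.
  case: (Req_dec (ln (y / INR p / INR m)) 0) => e.
  - rewrite e. have -> : INR p * INR m * 0 ^ 2 = 0 by ring. have -> : INR m * 0 ^ 2 = 0 by ring.
    rewrite Rinv_0. ring.
  - have := pow_nonzero _ 2 e. move=> e2. field. repeat split; lra.
Qed.


Definition Tc : R := 10 ^ 12.
Definition Sfun (P : nat) (y : R) (n : nat) : R :=
  \big[Rplus/0]_(1 <= m < n.+1) (W P m * fy y m).
Definition KK (P : nat) : R :=
  \big[Rmult/1]_(5 <= p < P.+1 | prime p) (1 + kk p / INR p).

Lemma Tc_pos : 0 < Tc.
Proof. rewrite /Tc. apply pow_lt. lra. Qed.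

Lemma KK4 : KK 4 = 1.
Proof. by rewrite /KK big_geq. Qed.

Lemma KK_step P : KK P.+1 = KK P * (if prime P.+1 && (5 <= P.+1)%N then 1 + kk P.+1 / INR P.+1 else 1).
Proof.
  rewrite /KK. case: (leqP 5 P.+1) => h.
  - rewrite big_mkcond [in RHS]big_mkcond big_nat_recr //= andbT. done.
  - rewrite !big_geq //; try lia. rewrite andbF. ring.
Qed.

Lemma KK_step_p P : prime P.+1 -> (5 <= P.+1)%N -> KK P.+1 = KK P * (1 + kk P.+1 / INR P.+1).
Proof. move=> pp p5. by rewrite KK_step pp p5. Qed.
Lemma KK_step_np P : ~~ prime P.+1 -> KK P.+1 = KK P.
Proof. move=> np. rewrite KK_step (negbTE np) /=. ring. Qed.

Lemma KK_ge1 P : 1 <= KK P.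
Proof.
  rewrite /KK big_nat_cond. apply: (big_ind (fun x => 1 <= x)); [lra | move=> a b ha hb; nra |].
  move=> p /andP [/andP [h5 _] pp]. have h := kk_nonneg p ltac:(lia).
  have hpos : 0 < INR p by apply (lt_INR 0); apply/ltP; lia.
  have : 0 <= kk p / INR p by apply Rmult_le_pos; [|left; apply Rinv_0_lt_compat]; lra.
  lra.
Qed.

Lemma INR_div_mul n p : (0 < p)%N -> INR (n %/ p) * INR p <= INR n.
Proof. move=> p0. rewrite -mult_INR. apply le_INR. apply/leP. exact: leq_divM. Qed.

Lemma main_induction (C0 : R) :
  0 <= C0 ->
  (forall y n, INR n * Tc <= y -> Sfun 4 y n <= C0) ->
  forall P, (4 <= P)%N -> forall y n, INR n * Tc <= y -> Sfun P y n <= C0 * KK P.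
Proof.
  move=> C0pos base. elim => [|P IH] // hP.
  case: (leqP 4 P) => h4; last first.
  { have e : P.+1 = 4%N by lia. rewrite e KK4 Rmult_1_r. exact: base. }
  have IH' := IH h4. move=> y n hy.
  have hK := KK_ge1 P.
  case pp: (prime P.+1); last first.
  { rewrite KK_step_np; last by rewrite pp. rewrite /Sfun. rewrite (eq_big_nat _ _ (F2 := fun m => W P m * fy y m)).
    - exact: IH'.
    - move=> m /andP [m1 _]. rewrite W_notprime //. by rewrite pp. }
  have p5 : (5 <= P.+1)%N by lia.
  rewrite (KK_step_p P pp p5). set p := P.+1.
  have p1 : (1 < p)%N by lia.
  have hp : 0 < INR p by apply (lt_INR 0); apply/ltP; lia.
  have kp : 0 <= kk p by apply kk_nonneg; lia.
  set G := fun m' => kk p * W P m' * fy y (p * m').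
  have step1 : Sfun p y n <= Sfun P y n +
      \big[Rplus/0]_(1 <= m < n.+1) (if (p %| m)%N then G (m %/ p)%N else 0).
  { rewrite /Sfun -sum_add. apply sum_le => m m1 _.
    have hW := W_step P m pp p5 m1. have hf := fy_nonneg y m.
    case: (boolP (p %| m)%N) => d.
    - rewrite /G. have -> : (p * (m %/ p))%N = m by rewrite mulnC divnK.
      have : W p m * fy y m <= (W P m + kk p * W P (m %/ p)) * fy y m.
      { apply Rmult_le_compat_r; auto. move: hW; rewrite /p d. done. }
      lra.
    - have : W p m * fy y m <= (W P m + 0) * fy y m.
      { apply Rmult_le_compat_r; auto. move: hW; rewrite /p (negbTE d). done. }
      lra. }
  rewrite (reindex_dvd p n G p1) in step1.
  have e2 : \big[Rplus/0]_(1 <= m < (n %/ p).+1) G m = kk p / INR p * Sfun P (y / INR p) (n %/ p).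
  { rewrite /Sfun -sum_scal. apply eq_big_nat => m /andP [m1 _].
    have p0 : (0 < p)%N by lia. rewrite /G (fy_mul y p m p0 m1). field. lra. }
  rewrite e2 in step1.
  have hy' : INR (n %/ p) * Tc <= y / INR p.
  { have := INR_div_mul n p ltac:(lia). have := Tc_pos. move=> hT hd.
    apply div_le_r; auto. nra. }
  have i1 := IH' y n hy. have i2 := IH' _ _ hy'.
  have hkp : 0 <= kk p / INR p by apply Rmult_le_pos; [|left; apply Rinv_0_lt_compat]; lra.
  have := Rmult_le_compat_l _ _ _ hkp i2. nra.
Qed.


Definition a2 (r : nat) : R := if r == 2%N then hh 2 else if r == 0%N then 0 else 1.
Definition a3 (r : nat) : R := if (r == 3%N) || (r == 6%N) then hh 3 else if r == 0%N then 0 else 1.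

Lemma prod_23 (s : seq nat) (F : nat -> R) : uniq s ->
  (forall q, q \in s -> q != 2%N -> q != 3%N -> F q = 1) ->
  \big[Rmult/1]_(q <- s) F q = (if 2%N \in s then F 2%N else 1) * (if 3%N \in s then F 3%N else 1).
Proof.
  elim: s => [|x s IH] /=; first by move=> _ _; rewrite big_nil /=; ring.
  move=> /andP [xs us] hF. rewrite big_cons IH //; last first.
  { move=> q qs; apply hF. by rewrite in_cons qs orbT. }
  rewrite !in_cons.
  case: (eqVneq x 2%N) => [ex|nx2].
  { subst x. have -> : (2 \in s)%N = false by apply/negbTE. rewrite /=. ring. }
  case: (eqVneq x 3%N) => [ex|nx3].
  { subst x. have -> : (3 \in s)%N = false by apply/negbTE. rewrite /=. ring. }
  rewrite hF ?in_cons ?eqxx // /=. ring.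
Qed.

Lemma W4_eq m : (0 < m)%N -> W 4 m = a2 (m %% 4) * a3 (m %% 9).
Proof.
  move=> m0. rewrite /W prod_23; [| exact: primes_uniq |]; last first.
  { move=> q qin q2 q3. rewrite /wq. have : prime q by move: qin; rewrite mem_primes => /andP [].
    move=> pq. have : (q <= 4)%N = false.
    { apply/negbTE. rewrite -ltnNge. case: q q2 q3 pq {qin} => [|[|[|[|[|q]]]]] //. }
    by move=> ->. }
  rewrite !mem_primes m0 /=.
  rewrite /wq /=.
  congr (_ * _).
  - rewrite /a2. case: (boolP (2 %| m)%N) => d.
    + have h1 : (1 <= logn 2 m)%N by rewrite -(pfactor_dvdn 1 (isT : prime 2) m0).
      case: (boolP (4 %| m)%N) => d4.
      * have h2 : (2 <= logn 2 m)%N by rewrite -(pfactor_dvdn 2 (isT : prime 2) m0).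
        have -> : (logn 2 m == 1)%N = false by apply/negbTE; lia.
        have -> : (m %% 4 == 2)%N = false by apply/negbTE; lia.
        have -> : (m %% 4 == 0)%N = true by apply/eqP; lia. done.
      * have h2 : ~~ (2 <= logn 2 m)%N by rewrite -(pfactor_dvdn 2 (isT : prime 2) m0).
        have -> : (logn 2 m == 1)%N = true by apply/eqP; lia.
        have -> : (m %% 4 == 2)%N = true by apply/eqP; lia. done.
    + have -> : (m %% 4 == 2)%N = false by apply/negbTE; lia.
      have -> : (m %% 4 == 0)%N = false by apply/negbTE; lia. done.
  - rewrite /a3. case: (boolP (3 %| m)%N) => d.
    + have h1 : (1 <= logn 3 m)%N by rewrite -(pfactor_dvdn 1 (isT : prime 3) m0).
      case: (boolP (9 %| m)%N) => d4.
      * have h2 : (2 <= logn 3 m)%N by rewrite -(pfactor_dvdn 2 (isT : prime 3) m0).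
        have -> : (logn 3 m == 1)%N = false by apply/negbTE; lia.
        have -> : ((m %% 9 == 3) || (m %% 9 == 6))%N = false by apply/negbTE; lia.
        have -> : (m %% 9 == 0)%N = true by apply/eqP; lia. done.
      * have h2 : ~~ (2 <= logn 3 m)%N by rewrite -(pfactor_dvdn 2 (isT : prime 3) m0).
        have -> : (logn 3 m == 1)%N = true by apply/eqP; lia.
        have -> : ((m %% 9 == 3) || (m %% 9 == 6))%N = true by apply/orP; lia. done.
    + have -> : ((m %% 9 == 3) || (m %% 9 == 6))%N = false by apply/negbTE; lia.
      have -> : (m %% 9 == 0)%N = false by apply/negbTE; lia. done.
Qed.

Lemma W4_period m : (0 < m)%N -> W 4 (m + 36) = W 4 m.
Proof.
  move=> m0. rewrite !W4_eq //; last lia.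
  have -> : ((m + 36) %% 4 = m %% 4)%N by lia.
  have -> : ((m + 36) %% 9 = m %% 9)%N by lia. done.
Qed.

Definition Om : R := \big[Rplus/0]_(1 <= m < 37) W 4 m.

Lemma window a : \big[Rplus/0]_(a.+1 <= m < a + 37) W 4 m = Om.
Proof.
  elim: a => [|a IH]; first by rewrite /Om.
  have e1 : \big[Rplus/0]_(a.+1 <= m < a + 38) W 4 m =
            W 4 a.+1 + \big[Rplus/0]_(a.+2 <= m < a + 38) W 4 m.
  { rewrite big_ltn //. lia. }
  have e2 : \big[Rplus/0]_(a.+1 <= m < a + 38) W 4 m =
            \big[Rplus/0]_(a.+1 <= m < a + 37) W 4 m + W 4 (a + 37)%N.
  { have -> : (a + 38 = (a + 37).+1)%N by lia. rewrite big_nat_recr //. lia. }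
  have e3 : W 4 (a + 37)%N = W 4 a.+1.
  { have -> : (a + 37 = a.+1 + 36)%N by lia. apply W4_period. lia. }
  have -> : (a.+1 + 37 = a + 38)%N by lia.
  lra.
Qed.


Lemma ln_div a b : 0 < a -> 0 < b -> ln (a / b) = ln a - ln b.
Proof.
  move=> ha hb. have hi : 0 < / b by apply Rinv_0_lt_compat.
  rewrite /Rdiv (ln_mult _ _ ha hi) (ln_Rinv _ hb). ring.
Qed.

Lemma ln_gap s t : 0 < s -> s <= t -> (t - s) / t <= ln t - ln s.
Proof.
  move=> hs hst. have ht : 0 < t by lra.
  have h := exp_ineq1_le (ln (s / t)). rewrite exp_ln in h; last by apply Rdiv_lt_0_compat.
  rewrite ln_div // in h.
  have -> : (t - s) / t = 1 - s / t by field; lra. lra.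
Qed.

Lemma ln36 : ln 36 <= 4.
Proof.
  rewrite -(ln_exp 4). apply ln_le_mono; first lra.
  have h : 1 + 1/8 <= exp (1/8) by apply exp_ineq1_le.
  have -> : 4 = INR 32 * (1/8) by rewrite INR_IZR_INZ /=; lra.
  rewrite exp_nmul. apply Rle_trans with ((IZR 9 / IZR 8) ^ 32).
  - apply (Zpow_ge 9 8 36 32). lia. vm_compute. discriminate.
  - apply pow_incr. lra.
Qed.

Lemma ln_Tc : ln Tc = Lg.
Proof. rewrite /Tc /Lg ln_pow; last lra. rewrite INR_IZR_INZ /=. ring. Qed.

Lemma key36 (y b : R) : 37 <= b -> 0 < y -> 27 <= ln (y / b) ->
  36 * / (b * ln (y / b) ^ 2) <= / ln (y / b) - / ln (y / (b - 36)).
Proof.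
  move=> hb hy hu.
  rewrite !ln_div in hu * ; try lra.
  set u := ln y - ln b in hu *.
  set D := ln b - ln (b - 36).
  have -> : ln y - ln (b - 36) = u + D by rewrite /u /D; ring.
  have h1 : 18 / b <= ln b - ln (b - 18).
  { have := ln_gap (b - 18) b ltac:(lra) ltac:(lra). have -> : b - (b - 18) = 18 by ring. done. }
  have h2 : 18 / (b - 18) <= ln (b - 18) - ln (b - 36).
  { have := ln_gap (b - 36) (b - 18) ltac:(lra) ltac:(lra).
    have -> : b - 18 - (b - 36) = 18 by ring. done. }
  have hD : 18 / b + 18 / (b - 18) <= D by rewrite /D; lra.
  have hD0 : 0 < D by (have : 0 < 18 / b by apply Rdiv_lt_0_compat; lra);
    (have : 0 < 18 / (b - 18) by apply Rdiv_lt_0_compat; lra); lra.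
  have hpoly : (18 / b + 18 / (b - 18)) * (b * u - 36) >= 36 * u.
  { have -> : (18 / b + 18 / (b - 18)) * (b * u - 36) = (18 * (2 * b - 18) * (b * u - 36)) / (b * (b - 18)) by field; lra.
    apply Rle_ge. apply div_le_r. apply Rmult_lt_0_compat; lra.
    have := Rmult_le_pos b (u - 4) ltac:(lra) ltac:(lra).
    have e : 18 * (2 * b - 18) * (b * u - 36) - 36 * u * (b * (b - 18)) = 324 * (b * (u - 4)) + 11664 by ring.
    lra. }
  have hDu : D * (b * u - 36) >= 36 * u.
  { have : 0 <= b * u - 36 by nra. nra. }
  have -> : / u - / (u + D) = D / (u * (u + D)) by field; lra.
  have -> : 36 * / (b * u ^ 2) = 36 / (b * u ^ 2) by rewrite /Rdiv.
  apply div_le_l. nra.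
  have -> : D / (u * (u + D)) * (b * u ^ 2) = (D * b * u) / (u + D) by field; lra.
  apply div_le_r. lra. nra.
Qed.


Lemma Om_eq : Om = (2 + hh 2) * (6 + 2 * hh 3).
Proof.
  rewrite /Om (eq_big_nat _ _ (F2 := fun m => a2 (m %% 4) * a3 (m %% 9))); last first.
  { move=> m /andP [m1 _]. exact: W4_eq. }
  rewrite /index_iota /= !big_cons big_nil /a2 /a3 /=. ring.
Qed.

Definition W36 : R := \big[Rplus/0]_(1 <= m < 37) (W 4 m / INR m).

Lemma W36_eq : W36 = 300996993816/167133741775 + 66771/85085 * hh 2 + 184/385 * hh 3 + 1/5 * hh 2 * hh 3.
Proof.
  rewrite /W36 (eq_big_nat _ _ (F2 := fun m => a2 (m %% 4) * a3 (m %% 9) / INR m)); last first.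
  { move=> m /andP [m1 _]. by rewrite W4_eq. }
  rewrite /index_iota /= !big_cons big_nil /a2 /a3 /=. field.
Qed.

Lemma Om_nonneg : 0 <= Om.
Proof. rewrite /Om. apply sum_nonneg => i _ _. apply W_nonneg. Qed.

Lemma hh2_eq : hh 2 = 21218 / 10000.
Proof. rewrite /hh /g1p /=. field. Qed.

Lemma hh3_nonneg : 0 <= hh 3.
Proof. apply hh_nonneg. done. Qed.

Lemma base_numeric (ly : R) : 27 <= ly -> 36 * ly * W36 <= Om * (ly - 4) ^ 2.
Proof.
  move=> h. rewrite W36_eq Om_eq hh2_eq. have h3 := hh3_nonneg.
  have hq : 19.5 * ly <= (ly - 4) ^ 2 by nra.
  set t := hh 3 in h3 *.
  have hly : 0 <= ly by lra.
  have hp : 0 <= (2 + 21218 / 10000) * (6 + 2 * t) by nra.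
  nra.
Qed.


Definition Fm (y : R) (m : nat) : R := / ln (y / INR m).

Section Base.
Variables (y : R) (n : nat).
Hypothesis hyn : INR n * Tc <= y.
Hypothesis n1 : (1 <= n)%N.

Lemma INR_pos m : (1 <= m)%N -> 0 < INR m.
Proof. move=> h. apply (lt_INR 0). by apply/ltP. Qed.

Lemma y_pos : 0 < y.
Proof.
  have := Tc_pos. have : 1 <= INR n by (apply (le_INR 1); apply/leP). nra.
Qed.

Lemma u_ge m : (1 <= m)%N -> (m <= n)%N -> Lg <= ln (y / INR m).
Proof.
  move=> m1 mn. have hm := INR_pos m m1. have hT := Tc_pos.
  have hmn : INR m <= INR n by apply le_INR; apply/leP.
  rewrite -ln_Tc. apply ln_le_mono; first done.
  apply div_le_r; first done. nra.
Qed.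

Lemma ly_ge : Lg <= ln y.
Proof. have := u_ge 1 (leqnn 1) n1. by rewrite /= /Rdiv Rinv_1 Rmult_1_r. Qed.

Lemma u_eq m : (1 <= m)%N -> ln (y / INR m) = ln y - ln (INR m).
Proof. move=> m1. apply ln_div. exact: y_pos. exact: INR_pos. Qed.

Lemma lnm_nonneg m : (1 <= m)%N -> 0 <= ln (INR m).
Proof.
  move=> m1. rewrite -ln_1. apply ln_le_mono; first lra. by apply (le_INR 1); apply/leP.
Qed.

Lemma lnm_le4 m : (m <= 36)%N -> (1 <= m)%N -> ln (INR m) <= 4.
Proof.
  move=> m36 m1. apply Rle_trans with (ln 36); last exact ln36.
  apply ln_le_mono. exact: INR_pos.
  have := le_INR m 36 ltac:(apply/leP; done). rewrite (INR_IZR_INZ 36) /=. done.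
Qed.

Lemma fy_small m : (1 <= m)%N -> (m <= n)%N -> (m <= 36)%N ->
  fy y m <= / INR m * / (ln y - 4) ^ 2.
Proof.
  move=> m1 mn m36. have hL := Lg_ge. have hu := u_ge m m1 mn. have hm := INR_pos m m1.
  have h4 := lnm_le4 m m36 m1. have hly := ly_ge.
  rewrite /fy u_eq // in hu *. rewrite -Rinv_mult.
  apply Rinv_le_contravar. apply Rmult_lt_0_compat; first done. apply pow_lt. lra.
  apply Rmult_le_compat_l; first lra. apply pow_incr. lra.
Qed.

Lemma sumA k : (k <= 36)%N -> (k <= n)%N ->
  \big[Rplus/0]_(1 <= m < k.+1) (W 4 m * fy y m) <= W36 * / (ln y - 4) ^ 2.
Proof.
  move=> k36 kn.
  apply Rle_trans with (\big[Rplus/0]_(1 <= m < k.+1) (W 4 m / INR m * / (ln y - 4) ^ 2)).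
  { apply sum_le => m m1 mk.   have mn : (m <= n)%N by lia. have m36 : (m <= 36)%N by lia.
    have := W_nonneg 4 m. have := fy_small m m1 mn m36.
    move=> h1 h2. rewrite /Rdiv Rmult_assoc. apply Rmult_le_compat_l; auto. }
  set c := / (ln y - 4) ^ 2.
  have hc : 0 <= c by rewrite /c; left; apply Rinv_0_lt_compat, pow_lt; have := ly_ge; have := Lg_ge; lra.
  have e1 : W36 * c = \big[Rplus/0]_(1 <= m < 37) (W 4 m / INR m * c).
  { rewrite /W36 Rmult_comm -sum_scal. apply eq_big_nat => m _. ring. }
  have e2 : \big[Rplus/0]_(1 <= m < 37) (W 4 m / INR m * c) =
     \big[Rplus/0]_(1 <= m < k.+1) (W 4 m / INR m * c) + \big[Rplus/0]_(k.+1 <= m < 37) (W 4 m / INR m * c).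
  { rewrite (@big_cat_nat _ _ _ k.+1 1 37) //; lia. }
  have hr : 0 <= \big[Rplus/0]_(k.+1 <= i < 37) (W 4 i / INR i * c).
  { apply sum_nonneg => i i1 _. have i0 : (1 <= i)%N by lia. apply Rmult_le_pos; auto. apply Rmult_le_pos. apply W_nonneg.
    left; apply Rinv_0_lt_compat. exact: INR_pos. }
  lra.
Qed.

Lemma small_part : W36 * / (ln y - 4) ^ 2 <= Om / (36 * ln y).
Proof.
  have hl := ly_ge. have hL := Lg_ge.
  have h := base_numeric (ln y) ltac:(lra).
  have hp : 0 < (ln y - 4) ^ 2 by apply pow_lt; lra.
  apply div_le_r. lra.
  have -> : W36 * / (ln y - 4) ^ 2 * (36 * ln y) = (36 * ln y * W36) / (ln y - 4) ^ 2 by field; lra.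
  apply div_le_l; lra.
Qed.

Lemma F_upper m : (1 <= m)%N -> (m <= n)%N -> Fm y m <= / Lg.
Proof.
  move=> m1 mn. have := u_ge m m1 mn. have := Lg_ge. rewrite /Fm => hL hu.
  apply Rinv_le_contravar; lra.
Qed.

Lemma F_lower m : (1 <= m)%N -> (m <= n)%N -> / ln y <= Fm y m.
Proof.
  move=> m1 mn. have := u_ge m m1 mn. have := Lg_ge. have := lnm_nonneg m m1.
  rewrite /Fm u_eq // => h0 hL hu. apply Rinv_le_contravar; lra.
Qed.

Lemma key_step j : (37 + j <= n)%N ->
  36 * fy y (37 + j) <= Fm y (37 + j) - Fm y j.+1.
Proof.
  move=> hj. have hu := u_ge (37 + j) ltac:(lia) hj. have := Lg_ge => hL.
  have e : INR j.+1 = INR (37 + j) - 36.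
  { rewrite plus_INR S_INR (INR_IZR_INZ 37) /=. ring. }
  rewrite /fy /Fm e. apply key36.
  - rewrite plus_INR (INR_IZR_INZ 37) /=. have := pos_INR j. lra.
  - exact: y_pos.
  - lra.
Qed.

Lemma invariant j : (36 + j <= n)%N ->
  \big[Rplus/0]_(1 <= m < (36 + j).+1) (W 4 m * fy y m)
    + / 36 * \big[Rplus/0]_(1 <= m < 37) (W 4 m * Fm y m)
  <= \big[Rplus/0]_(1 <= m < 37) (W 4 m * fy y m)
    + / 36 * \big[Rplus/0]_(j.+1 <= m < j + 37) (W 4 m * Fm y m).
Proof.
  elim: j => [|j IH] hj.
  { apply Req_le. reflexivity. }
  have IH' := IH ltac:(lia).
  have e1 : \big[Rplus/0]_(1 <= m < (36 + j.+1).+1) (W 4 m * fy y m)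
        = \big[Rplus/0]_(1 <= m < (36 + j).+1) (W 4 m * fy y m) + W 4 (37 + j)%N * fy y (37 + j).
  { have -> : (36 + j.+1).+1 = (36 + j).+2 by lia. rewrite big_nat_recr //=. }
  have e2 : \big[Rplus/0]_(j.+1 <= m < j + 38) (W 4 m * Fm y m) =
            W 4 j.+1 * Fm y j.+1 + \big[Rplus/0]_(j.+2 <= m < j + 38) (W 4 m * Fm y m).
  { rewrite big_ltn //. lia. }
  have e3 : \big[Rplus/0]_(j.+1 <= m < j + 38) (W 4 m * Fm y m) =
            \big[Rplus/0]_(j.+1 <= m < j + 37) (W 4 m * Fm y m) + W 4 (j + 37)%N * Fm y (j + 37)%N.
  { have -> : (j + 38 = (j + 37).+1)%N by lia. rewrite big_nat_recr //. lia. }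
  have e4 : W 4 (j + 37)%N = W 4 j.+1.
  { have -> : (j + 37 = j.+1 + 36)%N by lia. apply W4_period. lia. }
  have e5 : (j.+1 + 37 = j + 38)%N by lia.
  have e6 : (j + 37 = 37 + j)%N by lia.
  rewrite e1 e5.
  have hk := key_step j ltac:(lia).
  have hw := W_nonneg 4 j.+1.
  have e7 : W 4 (j + 37)%N * Fm y (j + 37)%N = W 4 j.+1 * Fm y (37 + j)%N by rewrite e4 e6.
  have e8 : W 4 (37 + j)%N = W 4 j.+1 by rewrite -e6.
  rewrite e8.
  have := Rmult_le_compat_l _ _ _ hw hk. lra.
Qed.


Lemma base_main : Sfun 4 y n <= Om / (36 * Lg).
Proof.
  have hL := Lg_ge. have hl := ly_ge. have hO := Om_nonneg.
  have hs := small_part.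
  have hfin : Om / (36 * ln y) <= Om / (36 * Lg).
  { apply Rmult_le_compat_l; auto. apply Rinv_le_contravar; lra. }
  case: (leqP n 36) => hn.
  { rewrite /Sfun. have := sumA n hn (leqnn n). lra. }
  set j := (n - 36)%N.
  have ej : n = (36 + j)%N by rewrite /j; lia.
  have inv := invariant j ltac:(lia).
  rewrite /Sfun ej.
  have s1 := sumA 36 (leqnn 36) ltac:(lia).
  have win : \big[Rplus/0]_(j.+1 <= m < j + 37) (W 4 m * Fm y m) <= / Lg * Om.
  { rewrite -(window j) -sum_scal. apply sum_le => m m1 m2.
    rewrite Rmult_comm. apply Rmult_le_compat_r. apply W_nonneg. apply F_upper; lia. }
  have s1F : / ln y * Om <= \big[Rplus/0]_(1 <= m < 37) (W 4 m * Fm y m).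
  { rewrite /Om -sum_scal. apply sum_le => m m1 m2.
    rewrite Rmult_comm. apply Rmult_le_compat_l. apply W_nonneg. apply F_lower; lia. }
  have e : Om / (36 * Lg) = / 36 * (/ Lg * Om) by field; lra.
  have e' : Om / (36 * ln y) = / 36 * (/ ln y * Om) by field; lra.
  lra.
Qed.

End Base.

Lemma base_bound y n : INR n * Tc <= y -> Sfun 4 y n <= Om / (36 * Lg).
Proof.
  move=> h. case: n h => [|n] h.
  { rewrite /Sfun big_geq //. have := Om_nonneg. have := Lg_ge. move=> hL hO.
    apply Rmult_le_pos; auto. left. apply Rinv_0_lt_compat. lra. }
  apply base_main; auto.
Qed.


Lemma sum_recr (a b : nat) (F : nat -> R) : (a <= b)%N ->
  \big[Rplus/0]_(a <= i < b.+1) F i = \big[Rplus/0]_(a <= i < b) F i + F b.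
Proof. move=> h. by rewrite big_nat_recr. Qed.

Definition aa : R := 1 - / Lg.

Lemma aa_ge : 26 / 27 <= aa.
Proof. have := Lg_ge. rewrite /aa => h. have : / Lg <= / 27 by apply Rinv_le_contravar; lra. lra. Qed.

Lemma telescope_term (n : nat) : (2 <= n)%N ->
  exp (- (1 + aa) * ln (INR n)) <= / aa * (exp (- aa * ln (INR n.-1)) - exp (- aa * ln (INR n))).
Proof.
  move=> n2. have ha := aa_ge.
  have hn : 2 <= INR n by (apply (le_INR 2); apply/leP).
  have e1 : INR n.-1 = INR n - 1.
  { case: n n2 hn => [|n] // _ _. rewrite S_INR /=. ring. }
  have hn1 : 0 < INR n.-1 by lra.
  set X := exp (- aa * ln (INR n)).
  have hX : 0 < X by apply exp_pos.
  have eA : exp (- (1 + aa) * ln (INR n)) = X / INR n.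
  { rewrite /X. have -> : - (1 + aa) * ln (INR n) = - aa * ln (INR n) + - ln (INR n) by ring.
    rewrite exp_plus exp_Ropp exp_ln; last lra. done. }
  have eB : exp (- aa * ln (INR n.-1)) = X * exp (aa * (ln (INR n) - ln (INR n.-1))).
  { rewrite /X -exp_plus. f_equal. ring. }
  have hg := ln_gap (INR n.-1) (INR n) hn1 ltac:(lra).
  rewrite e1 in hg. have e2 : INR n - (INR n - 1) = 1 by ring. rewrite e2 in hg. rewrite -e1 in hg.
  have hexp := exp_ineq1_le (aa * (ln (INR n) - ln (INR n.-1))).
  rewrite eA eB.
  have h1 : aa * (1 / INR n) <= aa * (ln (INR n) - ln (INR n.-1)).
  { apply Rmult_le_compat_l; lra. }
  have h2 : X * (1 + aa * (1 / INR n)) <= X * exp (aa * (ln (INR n) - ln (INR n.-1))).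
  { apply Rmult_le_compat_l; lra. }
  have -> : X / INR n = / aa * (X * (1 + aa * (1 / INR n)) - X) by field; lra.
  apply Rmult_le_compat_l. left; apply Rinv_0_lt_compat; lra. lra.
Qed.

Lemma telescope (P : nat) : (50 <= P)%N ->
  \big[Rplus/0]_(51 <= n < P.+1) exp (- (1 + aa) * ln (INR n))
   <= / aa * (exp (- aa * ln (INR 50)) - exp (- aa * ln (INR P))).
Proof.
  elim: P => [|P IH] // hP.
  case: (leqP P 49) => h.
  { have e : P.+1 = 50%N by lia. rewrite e big_geq //. lra. }
  have IH' := IH ltac:(lia).
  have hr : (51 <= P.+1)%N by lia.
  rewrite (sum_recr _ _ _ hr).
  have := telescope_term P.+1 ltac:(lia). have -> : P.+1.-1 = P by []. nra.
Qed.


Definition beta0 : R := 289 / 12500.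
Definition cst : R := 2 / (1 - beta0) ^ 2.

Lemma Ep50 : Ep 50 <= 289 / 250.
Proof.
  apply Ep_le => //. lra.
  rewrite (INR_IZR_INZ 50) /=. apply (Zpow_ge 289 250 50 27). lia. vm_compute. discriminate.
Qed.

Lemma kappa_tail (p : nat) : (51 <= p)%N ->
  kk p / INR p <= cst * exp (- (1 + aa) * ln (INR p)).
Proof.
  move=> p51. have hL := Lg_ge. have ha := aa_ge.
  have hp : 51 <= INR p by natR 51%N p p51.
  set E := Ep p.
  have hE1 : 1 <= E by apply Ep_ge1; lia.
  have eE : exp (- aa * ln (INR p)) = E / INR p.
  { rewrite /E /Ep /aa. have -> : - (1 - / Lg) * ln (INR p) = ln (INR p) / Lg + - ln (INR p) by field; lra.
    rewrite exp_plus exp_Ropp exp_ln; last lra. done. }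
  have eE2 : exp (- (1 + aa) * ln (INR p)) = E / INR p ^ 2.
  { have -> : - (1 + aa) * ln (INR p) = - aa * ln (INR p) + - ln (INR p) by ring.
    rewrite exp_plus eE exp_Ropp exp_ln; last lra. field. lra. }
  have hb : E / INR p <= beta0.
  { rewrite -eE. apply Rle_trans with (exp (- aa * ln (INR 50))).
    - apply exp_le_mono. have : ln (INR 50) <= ln (INR p).
      { apply ln_le_mono. rewrite (INR_IZR_INZ 50) /=. lra. rewrite (INR_IZR_INZ 50) /=. lra. }
      nra.
    - have e50 : exp (- aa * ln (INR 50)) = Ep 50 / INR 50.
      { rewrite /Ep /aa. have h50 : 0 < INR 50 by rewrite (INR_IZR_INZ 50) /=; lra.
        have -> : - (1 - / Lg) * ln (INR 50) = ln (INR 50) / Lg + - ln (INR 50) by field; lra.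
        rewrite exp_plus exp_Ropp exp_ln //. }
      rewrite e50 (INR_IZR_INZ 50) /=. have := Ep50. rewrite /beta0. lra. }
  have hEp : E <= beta0 * INR p.
  { have : E / INR p * INR p <= beta0 * INR p by apply Rmult_le_compat_r; lra.
    have -> : E / INR p * INR p = E by field; lra. done. }
  rewrite eE2 /kk /hh (g1p_odd p ltac:(lia) ltac:(lia)) /qq -/E.
  have hb0 : beta0 = 289 / 12500 by [].
  have hpE : 0 < INR p - E by rewrite hb0 in hEp; lra.
  have -> : INR p / E / (INR p / E - 1) = INR p / (INR p - E) by field; lra.
  have -> : ((1 - / INR p) * (INR p / (INR p - E)) ^ 2 - 1) / INR p
          = (2 * INR p * E - INR p - E ^ 2) / (INR p * (INR p - E) ^ 2) by field; lra.
  have h1 : (2 * INR p * E - INR p - E ^ 2) / (INR p * (INR p - E) ^ 2) <= 2 * E / (INR p - E) ^ 2.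
  { apply div_le_l. apply Rmult_lt_0_compat. lra. apply pow_lt; lra.
    have -> : 2 * E / (INR p - E) ^ 2 * (INR p * (INR p - E) ^ 2) = 2 * INR p * E by field; lra.
    nra. }
  apply Rle_trans with (2 * E / (INR p - E) ^ 2); first done.
  have hq : INR p * (1 - beta0) <= INR p - E by lra.
  have hq0 : 0 < INR p * (1 - beta0) by rewrite hb0; nra.
  have hsq : (INR p * (1 - beta0)) ^ 2 <= (INR p - E) ^ 2 by apply pow_incr; lra.
  have -> : cst * (E / INR p ^ 2) = 2 * E / (INR p * (1 - beta0)) ^ 2.
  { rewrite /cst. field. rewrite hb0. split; lra. }
  apply Rmult_le_compat_l. lra. apply Rinv_le_contravar. apply pow_lt; lra. done.
Qed.


Lemma exp50 : exp (- aa * ln (INR 50)) <= beta0.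
Proof.
  have hL := Lg_ge.
  have h50 : 0 < INR 50 by rewrite (INR_IZR_INZ 50) /=; lra.
  have e50 : exp (- aa * ln (INR 50)) = Ep 50 / INR 50.
  { rewrite /Ep /aa.
    have -> : - (1 - / Lg) * ln (INR 50) = ln (INR 50) / Lg + - ln (INR 50) by field; lra.
    rewrite exp_plus exp_Ropp exp_ln //. }
  rewrite e50 (INR_IZR_INZ 50) /=. have := Ep50. rewrite /beta0. lra.
Qed.

Definition Tsum (P : nat) : R :=
  \big[Rplus/0]_(51 <= p < P.+1) (if prime p then kk p / INR p else 0).

Definition tau0 : R := cst * (27 / 26) * beta0.

Lemma Tsum_le P : (50 <= P)%N -> Tsum P <= tau0.
Proof.
  move=> hP. have ha := aa_ge. have hb := exp50.
  have hc : 0 <= cst by rewrite /cst /beta0; apply Rmult_le_pos; [lra | left; apply Rinv_0_lt_compat, pow_lt; lra].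
  apply Rle_trans with (\big[Rplus/0]_(51 <= n < P.+1) (cst * exp (- (1 + aa) * ln (INR n)))).
  { apply sum_le => i i1 _. case: (prime i).
    - exact: kappa_tail.
    - apply Rmult_le_pos; auto. left; apply exp_pos. }
  rewrite sum_scal. have := telescope P hP. move=> ht.
  have hx : 0 < exp (- aa * ln (INR P)) by apply exp_pos.
  have hia : / aa <= 27 / 26.
  { have -> : (27 / 26 : R) = / (26 / 27) by field. apply Rinv_le_contravar; lra. }
  have hia0 : 0 < / aa by apply Rinv_0_lt_compat; lra.
  have : / aa * (exp (- aa * ln (INR 50)) - exp (- aa * ln (INR P))) <= 27 / 26 * beta0.
  { have : / aa * (exp (- aa * ln (INR 50)) - exp (- aa * ln (INR P))) <= / aa * beta0.
    { apply Rmult_le_compat_l; lra. }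
    have : / aa * beta0 <= 27 / 26 * beta0 by apply Rmult_le_compat_r; rewrite /beta0; lra.
    lra. }
  rewrite /tau0. move=> h2.
  have := Rmult_le_compat_l _ _ _ hc ht. have := Rmult_le_compat_l _ _ _ hc h2. lra.
Qed.

Lemma tau0_val : tau0 <= 51 / 1000.
Proof. rewrite /tau0 /cst /beta0. lra. Qed.


Lemma kappa_head (p : nat) (b c : R) : (3 <= p)%N -> 0 < b -> b < INR p -> INR p <= b ^ 27 ->
  (INR p - 1) * INR p - (INR p - b) ^ 2 <= c * INR p * (INR p - b) ^ 2 ->
  kk p / INR p <= c.
Proof.
  move=> p3 hb hbp hpow hpoly. have hp : 3 <= INR p by natR 3%N p p3.
  have hE := Ep_le p b ltac:(lia) hb hpow.
  have hE1 := Ep_ge1 p ltac:(lia).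
  set Q0 := INR p / b.
  have hQ1 : 1 < Q0. { rewrite /Q0. apply Rmult_lt_reg_r with b; auto. rewrite /Rdiv Rmult_assoc Rinv_l; lra. }
  have hQq : Q0 <= qq p.
  { rewrite /Q0 /qq. apply Rmult_le_compat_l. lra. apply Rinv_le_contravar; lra. }
  have hh1 := hh_upper p Q0 ltac:(lia) ltac:(lia) hQ1 hQq.
  have eQ : Q0 / (Q0 - 1) = INR p / (INR p - b) by rewrite /Q0; field; lra.
  rewrite eQ in hh1.
  rewrite /kk. apply div_le_l. lra.
  have : (1 - / INR p) * (INR p / (INR p - b)) ^ 2 - 1 = ((INR p - 1) * INR p - (INR p - b) ^ 2) / (INR p - b) ^ 2
    by field; lra.
  move=> e. have : ((INR p - 1) * INR p - (INR p - b) ^ 2) / (INR p - b) ^ 2 <= c * INR p.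
  { apply div_le_l. apply pow_lt; lra. lra. }
  lra.
Qed.

Lemma hh3_le : hh 3 <= 3129 / 2000.
Proof.
  have hp : INR 3 = 3 by rewrite (INR_IZR_INZ 3) /=.
  have hE : Ep 3 <= 651 / 625.
  { apply Ep_le => //. lra. rewrite hp. apply (Zpow_ge 651 625 3 27). lia. vm_compute. discriminate. }
  set Q0 := 3 / (651 / 625).
  have hQ1 : 1 < Q0 by rewrite /Q0; lra.
  have hQq : Q0 <= qq 3.
  { rewrite /Q0 /qq hp. have := Ep_pos 3. move=> h. apply Rmult_le_compat_l. lra. apply Rinv_le_contravar; lra. }
  have := hh_upper 3 Q0 isT ltac:(lia) hQ1 hQq. rewrite hp /Q0. lra.
Qed.


Lemma kappa_nonneg p : (3 <= p)%N -> 0 <= kk p / INR p.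
Proof.
  move=> h. apply Rmult_le_pos. exact: kk_nonneg. left. apply Rinv_0_lt_compat. apply (lt_INR 0). apply/ltP. lia.
Qed.

Lemma mono_step a b c d : 1 <= a <= b -> 1 <= c <= d -> 1 <= a * c <= b * d.
Proof. move=> [h1 h2] [h3 h4]. split; nra. Qed.

Lemma KK50_le : KK 50 <= 11269 / 10000.
Proof.
  rewrite /KK -big_filter.
  have el : [seq p <- index_iota 5 51 | prime p] = [:: 5; 7; 11; 13; 17; 19; 23; 29; 31; 37; 41; 43; 47]%N by vm_compute.
  rewrite el !big_cons big_nil.
  have k5 : kk 5 / INR 5 <= 5787/100000.
  { apply (kappa_head 5 (2123/2000)); [done | lra | simpl; lra | rewrite (INR_IZR_INZ 5) /=; apply (Zpow_ge 2123 2000 5 27); [lia | vm_compute; discriminate] | simpl; lra]. }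
  have k7 : kk 7 / INR 7 <= 561/20000.
  { apply (kappa_head 7 (2687/2500)); [done | lra | simpl; lra | rewrite (INR_IZR_INZ 7) /=; apply (Zpow_ge 2687 2500 7 27); [lia | vm_compute; discriminate] | simpl; lra]. }
  have k11 : kk 11 / INR 11 <= 549/50000.
  { apply (kappa_head 11 (10929/10000)); [done | lra | simpl; lra | rewrite (INR_IZR_INZ 11) /=; apply (Zpow_ge 10929 10000 11 27); [lia | vm_compute; discriminate] | simpl; lra]. }
  have k13 : kk 13 / INR 13 <= 391/50000.
  { apply (kappa_head 13 (10997/10000)); [done | lra | simpl; lra | rewrite (INR_IZR_INZ 13) /=; apply (Zpow_ge 10997 10000 13 27); [lia | vm_compute; discriminate] | simpl; lra]. }
  have k17 : kk 17 / INR 17 <= 57/12500.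
  { apply (kappa_head 17 (11107/10000)); [done | lra | simpl; lra | rewrite (INR_IZR_INZ 17) /=; apply (Zpow_ge 11107 10000 17 27); [lia | vm_compute; discriminate] | simpl; lra]. }
  have k19 : kk 19 / INR 19 <= 73/20000.
  { apply (kappa_head 19 (11153/10000)); [done | lra | simpl; lra | rewrite (INR_IZR_INZ 19) /=; apply (Zpow_ge 11153 10000 19 27); [lia | vm_compute; discriminate] | simpl; lra]. }
  have k23 : kk 23 / INR 23 <= 249/100000.
  { apply (kappa_head 23 (702/625)); [done | lra | simpl; lra | rewrite (INR_IZR_INZ 23) /=; apply (Zpow_ge 702 625 23 27); [lia | vm_compute; discriminate] | simpl; lra]. }
  have k29 : kk 29 / INR 29 <= 79/50000.
  { apply (kappa_head 29 (11329/10000)); [done | lra | simpl; lra | rewrite (INR_IZR_INZ 29) /=; apply (Zpow_ge 11329 10000 29 27); [lia | vm_compute; discriminate] | simpl; lra]. }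
  have k31 : kk 31 / INR 31 <= 69/50000.
  { apply (kappa_head 31 (11357/10000)); [done | lra | simpl; lra | rewrite (INR_IZR_INZ 31) /=; apply (Zpow_ge 11357 10000 31 27); [lia | vm_compute; discriminate] | simpl; lra]. }
  have k37 : kk 37 / INR 37 <= 49/50000.
  { apply (kappa_head 37 (11431/10000)); [done | lra | simpl; lra | rewrite (INR_IZR_INZ 37) /=; apply (Zpow_ge 11431 10000 37 27); [lia | vm_compute; discriminate] | simpl; lra]. }
  have k41 : kk 41 / INR 41 <= 1/1250.
  { apply (kappa_head 41 (459/400)); [done | lra | simpl; lra | rewrite (INR_IZR_INZ 41) /=; apply (Zpow_ge 459 400 41 27); [lia | vm_compute; discriminate] | simpl; lra]. }
  have k43 : kk 43 / INR 43 <= 73/100000.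
  { apply (kappa_head 43 (2299/2000)); [done | lra | simpl; lra | rewrite (INR_IZR_INZ 43) /=; apply (Zpow_ge 2299 2000 43 27); [lia | vm_compute; discriminate] | simpl; lra]. }
  have k47 : kk 47 / INR 47 <= 61/100000.
  { apply (kappa_head 47 (11533/10000)); [done | lra | simpl; lra | rewrite (INR_IZR_INZ 47) /=; apply (Zpow_ge 11533 10000 47 27); [lia | vm_compute; discriminate] | simpl; lra]. }
  have n5 : 0 <= kk 5 / INR 5 by apply kappa_nonneg.
  have n7 : 0 <= kk 7 / INR 7 by apply kappa_nonneg.
  have n11 : 0 <= kk 11 / INR 11 by apply kappa_nonneg.
  have n13 : 0 <= kk 13 / INR 13 by apply kappa_nonneg.
  have n17 : 0 <= kk 17 / INR 17 by apply kappa_nonneg.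
  have n19 : 0 <= kk 19 / INR 19 by apply kappa_nonneg.
  have n23 : 0 <= kk 23 / INR 23 by apply kappa_nonneg.
  have n29 : 0 <= kk 29 / INR 29 by apply kappa_nonneg.
  have n31 : 0 <= kk 31 / INR 31 by apply kappa_nonneg.
  have n37 : 0 <= kk 37 / INR 37 by apply kappa_nonneg.
  have n41 : 0 <= kk 41 / INR 41 by apply kappa_nonneg.
  have n43 : 0 <= kk 43 / INR 43 by apply kappa_nonneg.
  have n47 : 0 <= kk 47 / INR 47 by apply kappa_nonneg.
  have h : 1 <= (1 + kk 5 / INR 5) * ((1 + kk 7 / INR 7) * ((1 + kk 11 / INR 11) * ((1 + kk 13 / INR 13) * ((1 + kk 17 / INR 17) * ((1 + kk 19 / INR 19) * ((1 + kk 23 / INR 23) * ((1 + kk 29 / INR 29) * ((1 + kk 31 / INR 31) * ((1 + kk 37 / INR 37) * ((1 + kk 41 / INR 41) * ((1 + kk 43 / INR 43) * ((1 + kk 47 / INR 47) * 1))))))))))))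
     <= (1 + 5787/100000) * ((1 + 561/20000) * ((1 + 549/50000) * ((1 + 391/50000) * ((1 + 57/12500) * ((1 + 73/20000) * ((1 + 249/100000) * ((1 + 79/50000) * ((1 + 69/50000) * ((1 + 49/50000) * ((1 + 1/1250) * ((1 + 73/100000) * ((1 + 61/100000) * 1)))))))))))).
  { repeat (apply mono_step; [split; lra|]). lra. }
  lra.
Qed.


Lemma KK_succ P : KK P <= KK P.+1.
Proof.
  have h1 := KK_ge1 P.
  case pp: (prime P.+1).
  - case: (leqP 5 P.+1) => h5.
    + rewrite (KK_step_p P pp h5). have := kappa_nonneg P.+1 ltac:(lia). nra.
    + rewrite KK_step pp /=. have -> : (5 <= P.+1)%N = false by lia. lra.
  - rewrite KK_step_np; last by rewrite pp. lra.
Qed.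

Lemma KK_mono P Q : (P <= Q)%N -> KK P <= KK Q.
Proof.
  elim: Q => [|Q IH] h.
  - have -> : P = 0%N by lia. lra.
  - case: (leqP P Q) => h'.
    + have := IH h'. have := KK_succ Q. lra.
    + have -> : P = Q.+1 by lia. lra.
Qed.

Lemma Tsum_nonneg P : 0 <= Tsum P.
Proof.
  rewrite /Tsum. apply sum_nonneg => i i1 _. case: (prime i); last lra. apply kappa_nonneg. lia.
Qed.

Lemma KK_tail P : (50 <= P)%N -> KK P * (1 - Tsum P) <= KK 50.
Proof.
  elim: P => [|P IH] // hP.
  case: (leqP P 49) => h.
  { have e : P.+1 = 50%N by lia. rewrite e /Tsum big_geq //. lra. }
  have IH' := IH ltac:(lia).
  have eT : Tsum P.+1 = Tsum P + (if prime P.+1 then kk P.+1 / INR P.+1 else 0).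
  { rewrite /Tsum (sum_recr _ _ _ (ltac:(lia) : (51 <= P.+1)%N)). done. }
  have hT := Tsum_nonneg P. have hK := KK_ge1 P.
  case pp: (prime P.+1).
  - rewrite (KK_step_p P pp ltac:(lia)) eT pp.
    have hk := kappa_nonneg P.+1 ltac:(lia).
    set k := kk P.+1 / INR P.+1 in hk *.
    have : KK P * (1 + k) * (1 - (Tsum P + k)) <= KK P * (1 - Tsum P).
    { have -> : KK P * (1 + k) * (1 - (Tsum P + k)) = KK P * (1 - Tsum P) - KK P * (k * Tsum P + k * k) by ring.
      have : 0 <= KK P * (k * Tsum P + k * k) by apply Rmult_le_pos; nra. lra. }
    lra.
  - rewrite KK_step_np; last by rewrite pp. rewrite eT pp. rewrite Rplus_0_r. done.
Qed.

Lemma KK_all P : KK P <= 11269 / 10000 / (1 - 51 / 1000).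
Proof.
  have h50 := KK50_le. have h1 := KK_ge1 50.
  case: (leqP 50 P) => h.
  - have hT := Tsum_le P h. have := tau0_val. have := KK_tail P h. move=> ht ht0.
    have hK := KK_ge1 P.
    have : KK P * (1 - 51/1000) <= KK P * (1 - Tsum P) by apply Rmult_le_compat_l; lra.
    move=> h2. apply div_le_r. lra. lra.
  - have := KK_mono P 50 ltac:(lia). move=> hm. apply div_le_r. lra.
    have := KK_ge1 P. nra.
Qed.


Lemma INR_prod (s : seq nat) (f : nat -> nat) :
  INR (\prod_(i <- s) f i)%N = \big[Rmult/1]_(i <- s) INR (f i).
Proof.
  elim: s => [|x s IH]; first by rewrite !big_nil.
  by rewrite !big_cons mult_INR IH.
Qed.

Lemma prod_split (s : seq nat) (f g : nat -> R) :
  \big[Rmult/1]_(i <- s) (f i * g i) = \big[Rmult/1]_(i <- s) f i * \big[Rmult/1]_(i <- s) g i.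
Proof. by rewrite big_split. Qed.

Lemma term_W (x : R) (P d : nat) : (1 <= d)%N -> (d <= P)%N -> ln (x / INR d) <> 0 ->
  term x d = W P d * fy x d.
Proof.
  move=> d1 dP hl.
  have hd : 0 < INR d by apply (lt_INR 0); apply/ltP.
  rewrite /term /mobius /W /fy d1 /=.
  case: (boolP (all (fun p => logn p d == 1%N) (primes d))) => sq.
  - have hm : (-1) ^ size (primes d) * ((-1) ^ size (primes d) * 1) = 1.
    { rewrite Rmult_1_r -pow_add. have -> : (size (primes d) + size (primes d))%coq_nat = (2 * size (primes d))%coq_nat by lia.
      apply pow_1_even. }
    rewrite hm.
    move/allP: sq => sq.
    have eW : \big[Rmult/1]_(q <- primes d) wq P q (logn q d) = \big[Rmult/1]_(q <- primes d) ((1 - / INR q) * g1p q ^ 2).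
    { apply eq_big_seq => q qin. rewrite /wq. have := sq q qin. move/eqP => ->.
      have : (q <= P)%N. { apply: leq_trans dP. apply: dvdn_leq => //. by move: qin; rewrite mem_primes => /andP [_ /andP [_ ->]]. }
      by move=> ->. }
    have ephi : phiR d = \big[Rmult/1]_(q <- primes d) (INR q - 1).
    { rewrite /phiR totientE // INR_prod. apply eq_big_seq => q qin.
      have := sq q qin. move/eqP => ->. rewrite /= muln1.
      have q1 : (1 <= q)%N by move: qin; rewrite mem_primes => /andP [pq _]; exact: prime_gt0.
      rewrite -{2}(prednK q1) S_INR. ring. }
    have eg : g1 d = \big[Rmult/1]_(q <- primes d) g1p q.
    { rewrite /g1. apply eq_big_seq => q qin. have := sq q qin. move/eqP => ->. by rewrite pow_1. }
    have ed : INR d = \big[Rmult/1]_(q <- primes d) INR q.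
    { rewrite {1}(prod_prime_decomp d1) prime_decompE big_map INR_prod. apply eq_big_seq => q qin.
      have := sq q qin. move/eqP => ->. by rewrite expn1. }
    have eC : \big[Rmult/1]_(q <- primes d) (INR q - 1) = \big[Rmult/1]_(q <- primes d) (1 - / INR q) * INR d.
    { rewrite ed -big_split. apply eq_big_seq => q qin.
      have : 0 < INR q by apply (lt_INR 0); apply/ltP; move: qin; rewrite mem_primes => /andP [pq _]; exact: prime_gt0.
      move=> h. rewrite /=. field. lra. }
    rewrite eW prod_split.
    have eG : \big[Rmult/1]_(q <- primes d) (g1p q ^ 2) = (\big[Rmult/1]_(q <- primes d) g1p q) ^ 2.
    { have -> : (\big[Rmult/1]_(q <- primes d) g1p q) ^ 2 = \big[Rmult/1]_(q <- primes d) g1p q * \big[Rmult/1]_(q <- primes d) g1p q by ring.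
      rewrite -big_split. apply eq_big_seq => q _ /=. ring. }
    rewrite eG -eg ephi eC.
    have hl2 : ln (x / INR d) ^ 2 <> 0 by apply pow_nonzero.
    field. split; lra.
  -
    move/allPn: sq => [q qin hq].
    have qP : (q <= P)%N. { apply: leq_trans dP. apply: dvdn_leq => //. by move: qin; rewrite mem_primes => /andP [_ /andP [_ ->]]. }
    have h0 : \big[Rmult/1]_(q0 <- primes d) wq P q0 (logn q0 d) = 0.
    { rewrite (big_rem _ qin) /wq qP (negbTE hq) /=. exact: Rmult_0_l. }
    rewrite h0. rewrite /Rdiv !Rmult_0_l. reflexivity.
Qed.


Lemma final_numeric P : Om / (36 * Lg) * KK P <= 47 / 1000.
Proof.
  have hL := Lg_ge. have hK := KK_all P. have hK1 := KK_ge1 P.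
  have h3 := hh3_le. have h30 := hh3_nonneg.
  have hO : Om <= 37628 / 1000.
  { rewrite Om_eq hh2_eq. nra. }
  have hO0 := Om_nonneg.
  have h1 : Om / (36 * Lg) <= Om / (36 * 27).
  { apply Rmult_le_compat_l; auto. apply Rinv_le_contravar; lra. }
  have h2 : Om / (36 * Lg) * KK P <= Om / (36 * 27) * (11269 / 10000 / (1 - 51 / 1000)).
  { apply Rmult_le_compat; auto. apply Rmult_le_pos; auto. left; apply Rinv_0_lt_compat; lra. lra. }
  lra.
Qed.

Lemma Rleb_true a b : a <= b -> Rleb a b = true.
Proof. rewrite /Rleb. by case: (Rle_dec a b). Qed.

Theorem mainTheorem7 (x D : R) (hD : 0 <= D) (hxD : D <= x) :
  sum_upto (Rmin D (x / 10 ^ 12)) (term x) <= 47 / 1000.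
Proof.
  set M := Rmin D (x / 10 ^ 12).
  have hT := Tc_pos. rewrite /Tc in hT.
  have hM0 : 0 <= M.
  { rewrite /M. apply Rmin_glb; auto. apply Rmult_le_pos. lra. left; apply Rinv_0_lt_compat; lra. }
  have hMx : M <= x / 10 ^ 12 by rewrite /M; apply Rmin_r.
  have [hz1 hz2] := archimed M.
  set z := up M in hz1 hz2.
  have z1 : (1 <= z)%Z.
  { have : (0 < z)%Z by apply lt_IZR; lra. lia. }
  set n := (Z.to_nat z).-1.
  have ez : Z.to_nat z = n.+1 by rewrite /n; lia.
  have hn : INR n <= M.
  { have : INR (Z.to_nat z) = IZR z by rewrite INR_IZR_INZ Z2Nat.id //; lia.
    rewrite ez S_INR. lra. }
  have hnT : INR n * Tc <= x.
  { rewrite /Tc. have := Rmult_le_compat_r (10 ^ 12) _ _ (ltac:(lra)) (Rle_trans _ _ _ hn hMx).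
    have -> : x / 10 ^ 12 * 10 ^ 12 = x by field; lra. done. }
  rewrite /sum_upto -/M -/z. rewrite ez. rewrite -(big_mkord (fun d => (0 < d)%N && Rleb (INR d) M) (term x)).
  have e1 : \big[Rplus/0]_(0 <= d < n.+1 | (0 < d)%N && Rleb (INR d) M) term x d
          = \big[Rplus/0]_(1 <= d < n.+1) term x d.
  { rewrite big_ltn_cond //=. rewrite big_nat_cond [in RHS]big_nat_cond.
    apply eq_bigl => i. case: (boolP ((1 <= i) && (i < n.+1))%N) => //= /andP [i1 i2].
    rewrite i1 /= Rleb_true //. apply Rle_trans with (INR n); auto. apply le_INR. apply/leP. lia. }
  rewrite e1.
  set P := maxn n 4.
  have e2 : \big[Rplus/0]_(1 <= d < n.+1) term x d = Sfun P x n.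
  { rewrite /Sfun. apply eq_big_nat => m /andP [m1 m2].
    apply term_W => //. rewrite /P. lia.
    have hm : 0 < INR m by apply (lt_INR 0); apply/ltP; lia.
    have hmn : INR m <= INR n by apply le_INR; apply/leP; lia.
    have : Tc <= x / INR m.
    { apply div_le_r; auto. have := Tc_pos. nra. }
    move=> h. have := ln_le_mono Tc (x / INR m) Tc_pos h. rewrite ln_Tc. have := Lg_ge. lra. }
  rewrite e2.
  have hC : 0 <= Om / (36 * Lg).
  { apply Rmult_le_pos. exact: Om_nonneg. left; apply Rinv_0_lt_compat. have := Lg_ge. lra. }
  have := main_induction _ hC base_bound P (ltac:(rewrite /P; lia)) x n hnT.
  have := final_numeric P. lra.
Qed.
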